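(* Let $R$ be a topological ring and $M$ a locally compact left topological $R$-module that is finitely generated as an $R$-module. Then the Pontryagin dual $\widehat{M}$, with the right $R$-action $\chi^r(m)=\chi(rm)$, has the no small submodules property. In particular, for every $m\in\mathbb{N}$, $\widehat{R}^m\cong\widehat{R^m}$ has the no small submodules property, both as a left and as a right topological $R$-module.
   Context: All topological groups are Hausdorff; rings are unital. $\widehat{M}$ is the group of continuous homomorphisms $M\to\mathbb{S}^1$ with the compact-open topology. A module has the no small submodules property if some neighbourhood of $0$ contains no nonzero submodule. *)

(* Defs.v *)
From HB Require Import structures.
From mathcomp Require Import all_boot all_order all_algebra.
From mathcomp Require Import all_classical reals topology.
From mathcomp Require Import ring.
Set Implicit Arguments. Unset Strict Implicit. Unset Printing Implicit Defensive.
Import Order.TTheory GRing.Theory Num.Theory.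
Local Open Scope classical_set_scope.
Local Open Scope ring_scope.

HB.structure Definition FilteredAddMagma := {M of GRing.BaseAddMagma M & Filtered M M}.
HB.structure Definition TopZmod := {M of GRing.Zmodule M & Topological M}.

HB.structure Definition TopPzRing := {R of GRing.PzRing R & Topological R}.
(* Topological ring (Hausdorff by the standing convention). *)
Definition topological_ring (R : TopPzRing.type) : Prop :=
  [/\ hausdorff_space R,
      continuous (fun p : R * R => p.1 + p.2),
      continuous (fun x : R => - x) &
      continuous (fun p : R * R => p.1 * p.2)].

(* Left topological R-module (Hausdorff by the standing convention):
   the axioms are bundled as a mixin on a type that is both a left
   R-module and a topological space. *)
HB.mixin Record isTopLmod (R : TopPzRing.type) M
    & GRing.Lmodule R M & Topological M := {
  toplmod_hausdorff : hausdorff_space M ;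
  toplmod_add_continuous : continuous (fun p : M * M => p.1 + p.2) ;
  toplmod_opp_continuous : continuous (fun x : M => - x) ;
  toplmod_scale_continuous : continuous (fun p : R * M => p.1 *: p.2)
}.

HB.structure Definition TopLmod (R : TopPzRing.type) :=
  {M of GRing.Lmodule R M & Topological M & isTopLmod R M}.

From mathcomp Require Import normedtype.
Import numFieldNormedType.Exports.

Definition finitely_generated (R : pzRingType) (M : lmodType R) : Prop :=
  exists (n : nat) (v : 'I_n -> M),
    forall x : M, exists c : 'I_n -> R, x = \sum_(i < n) c i *: v i.

(* The circle group S^1 = {(a,b) in R0^2 | a^2 + b^2 = 1}, with the subspace
   topology of R0 x R0 (mathcomp-analysis's [set_type] topology), and complex
   multiplication. *)
Section Circle.
Variable R0 : realType.

Definition circle : set (R0 * R0) := [set z | z.1 ^+ 2 + z.2 ^+ 2 = 1].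
Definition S1 : topologicalType := set_type circle.

Definition cmul (z w : R0 * R0) : R0 * R0 :=
  (z.1 * w.1 - z.2 * w.2, z.1 * w.2 + z.2 * w.1).

Lemma circle_cmul (z w : R0 * R0) : circle z -> circle w -> circle (cmul z w).
Proof.
rewrite /circle /cmul /= => hz hw.
have -> : (z.1 * w.1 - z.2 * w.2) ^+ 2 + (z.1 * w.2 + z.2 * w.1) ^+ 2
        = (z.1 ^+ 2 + z.2 ^+ 2) * (w.1 ^+ 2 + w.2 ^+ 2) by ring.
by rewrite hz hw mulr1.
Qed.

Lemma circle_one : circle (1, 0).
Proof. by rewrite /circle /= expr0n /= addr0 expr1n. Qed.

Lemma circle_conj (z : R0 * R0) : circle z -> circle (z.1, - z.2).
Proof. by rewrite /circle /= sqrrN. Qed.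

Definition S1one : S1 := exist _ (1, 0) (mem_set circle_one).
Definition S1mul (z w : S1) : S1 :=
  exist _ (cmul (sval z) (sval w))
    (mem_set (circle_cmul (set_mem (svalP z)) (set_mem (svalP w)))).
Definition S1inv (z : S1) : S1 :=
  exist _ ((sval z).1, - (sval z).2) (mem_set (circle_conj (set_mem (svalP z)))).
End Circle.

(* Pontryagin dual of a topological abelian group (M, add):
   continuous homomorphisms M -> S^1, viewed inside the space
   {compact-open, M -> S1} of all maps with the compact-open topology. *)
Definition trivial_char (R0 : realType) (M : topologicalType) : {compact-open, M -> S1 R0} :=
  fun _ => S1one R0.

Definition is_character (R0 : realType) (M : topologicalType) (add : M -> M -> M)
    (chi : M -> S1 R0) : Prop :=
  continuous chi /\ forall x y, chi (add x y) = S1mul (chi x) (chi y).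

Definition dual_submodule (R : Type) (R0 : realType) (M : topologicalType)
    (add : M -> M -> M) (act : R -> M -> M) (N : set {compact-open, M -> S1 R0}) : Prop :=
  [/\ (forall chi, N chi -> is_character add chi),
      N (@trivial_char R0 M),
      (forall chi psi, N chi -> N psi -> N (fun x => S1mul (chi x) (psi x))),
      (forall chi, N chi -> N (fun x => S1inv (chi x))) &
      (forall r chi, N chi -> N (fun x => chi (act r x)))].

(* Neighbourhoods are taken in the
   compact-open topology; a set U of maps contains a submodule N (of characters)
   iff U ∩ dual does, so this is the subspace-topology notion on the dual. *)
Definition dual_nss (R : Type) (R0 : realType) (M : topologicalType)
    (add : M -> M -> M) (act : R -> M -> M) : Prop :=
  exists U : set {compact-open, M -> S1 R0},
    nbhs (@trivial_char R0 M) U /\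
    forall N, dual_submodule add act N -> N `<=` U -> N = [set @trivial_char R0 M].

(* Main.v *)
Require Import Defs.
From HB Require Import structures.
From mathcomp Require Import all_boot all_order all_algebra.
From mathcomp Require Import all_classical reals topology normedtype.
From mathcomp Require Import ring lra.
Import Order.TTheory GRing.Theory Num.Theory.
Import numFieldNormedType.Exports.
Local Open Scope classical_set_scope.
Local Open Scope ring_scope.

Section S1lemmas.
Variable R0 : realType.

Lemma S1_eq (z w : S1 R0) : sval z = sval w -> z = w.
Proof. by move=> h; apply: eq_sig_hprop => // x; apply: Prop_irrelevance. Qed.

Lemma S1_circ (z : S1 R0) : (sval z).1 ^+ 2 + (sval z).2 ^+ 2 = 1.
Proof. exact: (set_mem (svalP z)). Qed.

Lemma S1_idem (z : S1 R0) : S1mul z z = z -> z = S1one R0.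
Proof.
move=> /(congr1 sval) /= h; apply: S1_eq => /=.
have hc := S1_circ z.
move: h hc; case: (sval z) => a b /= [h1 h2] hc.
have hb : b = 0.
  have : b * (2 * a - 1) = 0 by rewrite mulrBr mulr1; lra.
  move/eqP; rewrite mulf_eq0 => /orP[/eqP //|/eqP ha].
  have ha' : a = 1/2 by lra.
  rewrite ha' in h1 hc; nra.
rewrite hb in h1 hc *; congr (_, _); nra.
Qed.

Lemma S1one_mul : S1mul (S1one R0) (S1one R0) = S1one R0.
Proof. by apply: S1_eq => /=; rewrite /cmul /=; congr (_,_); ring. Qed.

Lemma S1_doubling (f : nat -> S1 R0) :
  (forall k, f k.+1 = S1mul (f k) (f k)) ->
  (forall k, 0 < (sval (f k)).1) -> f 0%N = S1one R0.
Proof.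
move=> hf hpos.
have hle : forall k, (sval (f k)).1 <= 1.
  move=> k; have := S1_circ (f k); nra.
have key : forall k, (2 ^+ k) * (1 - (sval (f 0%N)).1) <= 1 - (sval (f k)).1.
  elim=> [|k IH]; first by rewrite expr0 mul1r.
  rewrite hf /= /cmul /=.
  have := S1_circ (f k); have := hpos k; have := hle k.
  case: (sval (f k)) IH => a b /= IH h1 h2 h3.
  rewrite exprS -mulrA.
  have : 2 * (1 - a) <= 1 - (a * a - b * b) by nra.
  lra.
set d := 1 - (sval (f 0%N)).1.
have d0 : 0 <= d by rewrite /d; have := hle 0%N; lra.
have dd : d = 0.
  apply/eqP; rewrite eq_le d0 andbT; apply/negP => /negP; rewrite -ltNge => dpos.
  have hinv : 0 < d^-1 by rewrite invr_gt0.
  have hb := archi_boundP (ltW hinv).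
  set k := Num.Def.archi_bound _ in hb.
  have hk : (k%:R : R0) <= 2 ^+ k.
    rewrite -natrX ler_nat; exact/ltnW/ltn_expl.
  have h1 : 1 < k%:R * d.
    by rewrite -ltr_pdivrMr // div1r.
  have h2 : k%:R * d <= 2 ^+ k * d by rewrite ler_wpM2r // ltW.
  have h3 := key k; have h4 := hpos k.
  have := lt_le_trans (lt_le_trans h1 h2) h3; lra.
apply: S1_eq => /=; move: dd; rewrite /d.
have := S1_circ (f 0%N); case: (sval (f 0%N)) => a b /= hc hd.
have ha : a = 1 by lra.
rewrite ha in hc *; congr (_,_); nra.
Qed.
End S1lemmas.
Section Generic.
Variable R0 : realType.

Definition Opos : set (S1 R0) := [set z | 0 < (sval z).1].

Lemma open_Opos : open Opos.
Proof.
pose P : set R0 := [set x : R0 | 0 < x].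
pose Q : set (R0 * R0) := (@fst R0 R0) @^-1` P.
have oQ : open Q.
  apply: open_comp; last exact: open_gt.
  move=> x _; exact: cvg_fst.
have hc : continuous (@set_val (R0 * R0)%type (@circle R0) : S1 R0 -> (R0 * R0)%type).
  exact: initial_continuous.
have -> : Opos = (@set_val (R0 * R0)%type (@circle R0) : S1 R0 -> (R0 * R0)%type) @^-1` Q by [].
apply: open_comp => // x _; exact: hc.
Qed.

Lemma nss_generic (M : topologicalType) (R : Type) (add : M -> M -> M)
  (act : R -> M -> M) (radd : R -> R -> R) n (v : 'I_n -> M) :
  (forall r i, act (radd r r) (v i) = add (act r (v i)) (act r (v i))) ->
  (forall chi : M -> S1 R0, is_character add chi ->
     (forall r i, chi (act r (v i)) = S1one R0) -> forall x, chi x = S1one R0) ->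
  dual_nss R0 add act.
Proof.
move=> Hdbl Hgen.
exists [set g : {compact-open, M -> S1 R0} | g @` range v `<=` Opos]; split.
  apply: open_nbhs_nbhs; split.
    apply: compact_open_open; last exact: open_Opos.
    apply: finite_compact; apply: finite_image.
    exact: finite_finset.
  by move=> _ [x _ <-]; rewrite /Opos /= ltr01.
move=> N [Hchar Htriv Hmul Hinv Hact] NU.
apply/seteqP; split => chi; last by move=> ->.
move=> Nchi; apply: funext => x; apply: (Hgen chi (Hchar _ Nchi)) => r i.
pose f k := chi (act (iter k (fun s => radd s s) r) (v i)).
apply: (@S1_doubling R0 f).
  move=> k; rewrite /f iterS Hdbl; exact: (Hchar _ Nchi).2.
move=> k; have := NU _ (Hact (iter k (fun s => radd s s) r) _ Nchi).
by move=> /(_ (f k)); apply; exists (v i).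
Qed.
End Generic.
Lemma char_sum (R0 : realType) (M : zmodType) (chi : M -> S1 R0) :
  (forall x y, chi (x + y) = S1mul (chi x) (chi y)) ->
  forall n (f : 'I_n -> M), (forall i, chi (f i) = S1one R0) ->
  chi (\sum_(i < n) f i) = S1one R0.
Proof.
move=> hom n f hf.
apply: (big_ind (fun x => chi x = S1one R0)) => //.
  by apply: S1_idem; rewrite -hom addr0.
by move=> x y hx hy; rewrite hom hx hy S1one_mul.
Qed.

Lemma row_gen (R : TopPzRing.type) (m : nat) (g : R -> R -> R) :
  (forall a, g a 1 = a) -> (forall a, g a 0 = 0) ->
  forall x : 'rV[R]_m, x = \sum_(j < m) map_mx (g (x 0 j)) (delta_mx 0 j).
Proof.
move=> g1 g0 x; apply/matrixP => i k.
rewrite summxE (bigD1 k) //= big1 ?addr0.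
  by rewrite !mxE ord1 !eqxx /= g1.
move=> j hj; rewrite !mxE ord1 eqxx /=.
by rewrite eq_sym (negbTE hj) g0.
Qed.

Theorem mainTheorem17 (R : TopPzRing.type) (R0 : realType) :
  topological_ring R ->
  (forall M : TopLmod.type R,
      locally_compact [set: M] -> finitely_generated M ->
      (* dual of M with the right action chi^r(m) = chi(r m) *)
      dual_nss R0 (fun x y : M => x + y) (fun (r : R) (m : M) => r *: m))
  /\
  (locally_compact [set: R] ->
   forall m : nat,
     (* dual of R^m as a right module: chi^r(x) = chi(r x) *)
     dual_nss R0 (fun x y : 'rV[R]_m => x + y)
       (fun (r : R) (x : 'rV[R]_m) => map_mx (fun a => r * a) x)
     /\
     (* dual of R^m as a left module: (r chi)(x) = chi(x r) *)
     dual_nss R0 (fun x y : 'rV[R]_m => x + y)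
       (fun (r : R) (x : 'rV[R]_m) => map_mx (fun a => a * r) x)).
Proof.
move=> _; split.
  move=> M _ [n [v hv]].
  apply: (@nss_generic R0 M R _ _ (fun r s => r + s) n v).
    by move=> r i; rewrite scalerDl.
  move=> chi [_ hom] h1 x; have [c ->] := hv x.
  by apply: (@char_sum R0 M chi hom) => i; apply: h1.
move=> _ m; split.
  apply: (@nss_generic R0 _ R _ _ (fun r s => r + s) m (fun j => delta_mx 0 j)).
    by move=> r i; apply/matrixP => a b; rewrite !mxE mulrDl.
  move=> chi [_ hom] h1 x.
  rewrite (@row_gen R m (fun r a => r * a) (fun a => mulr1 a) (fun a => mulr0 a) x).
  by apply: (@char_sum R0 _ chi hom) => i; apply: h1.
apply: (@nss_generic R0 _ R _ _ (fun r s => r + s) m (fun j => delta_mx 0 j)).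
  by move=> r i; apply/matrixP => a b; rewrite !mxE mulrDr.
move=> chi [_ hom] h1 x.
rewrite (@row_gen R m (fun r a => a * r) (fun a => mul1r a) (fun a => mul0r a) x).
by apply: (@char_sum R0 _ chi hom) => i; apply: h1.
Qed.
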